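(* Let $p$ be an odd prime and let $s$ be an integer with $0\le s\le \frac{p-1}{2}$. Then, modulo $[p]^2$, $$\sum_{k=0}^{\frac{p-1}{2}} \begin{bmatrix}2k\\k\end{bmatrix}_{q^2}^2 \begin{bmatrix}2k\\k+s\end{bmatrix}_{q^2} \frac{q^{2k}}{(-q^2;q^2)_k^2\,(-q;q)_{2k}^2} \equiv \begin{cases} (-1)^s q^{\frac{p-1}{2}-s^2} \begin{bmatrix}\frac{p-1}{2}\\ \frac{p-2s-1}{4}\end{bmatrix}_{q^4}^2 \dfrac{(q^2;q^2)_{\frac{p-2s-1}{2}}\,(q^2;q^2)_{\frac{p+2s-1}{2}}}{(q^4;q^4)_{\frac{p-1}{2}}^2}, & \text{if } s\equiv \frac{p-1}{2}\pmod 2,\\[2mm] 0, & \text{otherwise.}\end{cases}$$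
   Context: For an indeterminate $q$ and an integer $n\ge 0$: $(a;q)_0=1$ and $(a;q)_n=(1-a)(1-aq)\cdots(1-aq^{n-1})$. The $q$-binomial coefficient is $\begin{bmatrix}n\\k\end{bmatrix}_q=\frac{(q^{n-k+1};q)_k}{(q;q)_k}$ if $0\le k\le n$ and $0$ otherwise; if no base is indicated, the base is $q$. For a positive integer $p$, $[p]=\frac{1-q^p}{1-q}=1+q+\cdots+q^{p-1}$. For a prime $p$, $[p]$ is irreducible in $\mathbb{Q}[q]$; for rational functions $A,B$ of $q$ whose denominators are coprime to $[p]$, $A\equiv B\pmod{[p]^r}$ means that $A-B$, written in lowest terms, has numerator divisible by $[p]^r$ in $\mathbb{Q}[q]$. *)

(* Defs.v *)
From HB Require Import structures.
From mathcomp Require Import all_boot all_order all_algebra.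
From mathcomp Require Import fraction.
Set Implicit Arguments. Unset Strict Implicit. Unset Printing Implicit Defensive.
Import Order.TTheory GRing.Theory Num.Theory.
Local Open Scope ring_scope.

Notation RF := {fraction {poly rat}}.

Notation "x %:F" := (@FracField.tofrac _ x).

Definition qq : RF := ('X : {poly rat})%:F.

Definition qpoch (R : ringType) (a Q : R) (n : nat) : R :=
  \prod_(i < n) (1 - a * Q ^+ i).

Definition qbin (R : fieldType) (Q : R) (n k : nat) : R :=
  if (k <= n)%N then qpoch (Q ^+ (n - k + 1)) Q k / qpoch Q Q k else 0.

Definition qint (p : nat) : {poly rat} := \sum_(i < p) 'X ^+ i.

(* A == B (mod [p]^r) for rational functions: A - B times some polynomial
   denominator D coprime to [p] is [p]^r times a polynomial.  (Equivalent to
   "the numerator of A - B in lowest terms is divisible by [p]^r" when [p]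
   is irreducible.) *)
Definition qcong (p r : nat) (A B : RF) : Prop :=
  exists N D : {poly rat},
    coprimep D (qint p) /\ (A - B) * D%:F = ((qint p) ^+ r)%:F * N%:F.

(* Main.v *)
Require Import Defs.
From HB Require Import structures.
From mathcomp Require Import all_boot all_order all_algebra.
From mathcomp Require Import fraction.
From mathcomp Require Import ring zify.
Set Implicit Arguments. Unset Strict Implicit. Unset Printing Implicit Defensive.
Import Order.TTheory GRing.Theory Num.Theory.
Local Open Scope ring_scope.

Lemma qpoch0 (R : ringType) (a Q : R) : qpoch a Q 0 = 1.
Proof. by rewrite /qpoch big_ord0. Qed.

Lemma qpochS (R : ringType) (a Q : R) n :
  qpoch a Q n.+1 = qpoch a Q n * (1 - a * Q ^+ n).
Proof. by rewrite /qpoch big_ord_recr. Qed.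

Lemma qpochSl (R : comRingType) (a Q : R) n :
  qpoch a Q n.+1 = (1 - a) * qpoch (a * Q) Q n.
Proof.
rewrite /qpoch big_ord_recl /= expr0 mulr1; congr (_ * _).
by apply: eq_bigr => i _; rewrite /bump /= add1n exprS mulrA.
Qed.

Lemma qpochD (R : comRingType) (a Q : R) m n :
  qpoch a Q (m + n) = qpoch a Q m * qpoch (a * Q ^+ m) Q n.
Proof.
elim: n => [|n IH]; first by rewrite addn0 qpoch0 mulr1.
by rewrite addnS !qpochS IH exprD !mulrA.
Qed.

Lemma qpoch_zero (R : comRingType) (a Q : R) n i :
  (i < n)%N -> a * Q ^+ i = 1 -> qpoch a Q n = 0.
Proof.
move=> lt h; rewrite /qpoch (bigD1 (Ordinal lt) isT) /= h subrr mul0r //.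
Qed.

Definition gfun (F : fieldType) (Q a b x : F) : F :=
  (Q^+3 * a^+2 - 1) / (Q * a) * ((1 - x^+2) * (1 - x * b) * (1 - x / b))
  / (x * (1 - (a * Q)^-1) * (1 - (a * Q^+2)^-1)).

Lemma key_identity (F : fieldType) (Q a b x : F) :
  Q != 0 -> a != 0 -> b != 0 -> x != 0 ->
  1 - Q * a != 0 -> 1 - Q^+2 * a != 0 -> a * Q - 1 != 0 -> a * Q^+2 - 1 != 0 ->
  1 - Q * x * b != 0 -> b - Q * x != 0 -> 1 - Q^+2 * x^+2 != 0 ->
  (1 - Q^+2 * a / b) * (1 - Q^+2 * a * b) *
    ((1 - Q * a * x) * (1 - Q^+2 * a * x) / ((1 - Q * a) * (1 - Q^+2 * a)))
  - Q * (1 - Q * a / b) * (1 - Q * a * b) *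
    ((1 - (a * Q^+2)^-1 * x) * (1 - (a * Q^+2)^-1 * (x * Q))
       / ((1 - (a * Q^+2)^-1) * (1 - (a * Q^+2)^-1 * Q)))
  = (1 - (a * Q^+2)^-1 * x) * (1 - a * Q * x) *
    ((1 - Q * x^+2) * (1 - Q^+2 * x^+2) * Q /
       ((1 - Q * x * b) * (1 - Q * x / b) * (1 - Q^+2 * x^+2)^+2))
    * gfun Q a b (Q * x) - gfun Q a b x.
Proof.
move=> *; rewrite /gfun. field. by rewrite exprMn; repeat (apply/andP; split).
Qed.

Definition goodQ (F : fieldType) (Q : F) :=
  Q != 0 /\ forall j, (0 < j)%N -> Q ^+ j != 1.

Lemma nzX (F : fieldType) (Q : F) : goodQ Q -> forall j, Q ^+ j != 0.
Proof. by case=> h _ j; rewrite expf_neq0. Qed.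

Lemma nz1 (F : fieldType) (Q : F) : goodQ Q -> forall j, (0 < j)%N -> 1 - Q ^+ j != 0.
Proof. by case=> _ h j hj; rewrite subr_eq0 eq_sym h. Qed.

Lemma nz1' (F : fieldType) (Q : F) : goodQ Q -> forall j, (0 < j)%N -> Q ^+ j - 1 != 0.
Proof. by case=> _ h j hj; rewrite subr_eq0 h. Qed.

Lemma qpochQQ_neq0 (F : fieldType) (Q : F) m : goodQ Q -> qpoch Q Q m != 0.
Proof.
move=> g; apply/prodf_neq0 => i _; rewrite -exprS; exact: nz1.
Qed.

Lemma qpochQ2_neq0 (F : fieldType) (Q : F) m : goodQ Q -> qpoch (Q^+2) (Q^+2) m != 0.
Proof.
move=> g; apply/prodf_neq0 => i _; rewrite -exprM -exprD; exact: nz1.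
Qed.

Lemma qbin_gt (F : fieldType) (Q : F) N K : (N < K)%N -> qbin Q N K = 0.
Proof. by move=> h; rewrite /qbin leqNgt h. Qed.

Lemma qbinE (F : fieldType) (Q : F) N K : goodQ Q -> (K <= N)%N ->
  qbin Q N K = qpoch Q Q N / (qpoch Q Q K * qpoch Q Q (N - K)).
Proof.
move=> g h; rewrite /qbin h.
have -> : qpoch Q Q N = qpoch Q Q (N - K) * qpoch (Q ^+ (N - K + 1)) Q K.
  have e : N = (N - K + K)%N by rewrite subnK.
  by rewrite {1}e qpochD addn1 exprS.
have h1 := qpochQQ_neq0 (N - K) g; have h2 := qpochQQ_neq0 K g.
by field; rewrite h1 h2.
Qed.

Lemma nzXm (F : fieldType) (Q : F) : goodQ Q -> forall j, (0 < j)%N -> Q ^+ j.+1 - Q != 0.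
Proof.
move=> g j hj; have -> : Q ^+ j.+1 - Q = (Q ^+ j - 1) * Q by rewrite mulrBl mul1r exprSr.
rewrite mulf_neq0 //; first exact: nz1'.
by case: g.
Qed.

Ltac nzs := repeat (apply/andP; split); try done;
  try (by apply: qpochQQ_neq0); try (by apply: qpochQ2_neq0);
  try (by apply: nzX);
  try (by rewrite -?exprS -?exprSr -?exprD; apply: nz1; rewrite ?addnS);
  try (by rewrite -?exprS -?exprSr -?exprD; apply: nz1'; rewrite ?addnS);
  try (by apply: nzXm).

Definition Wt (F : fieldType) (Q : F) s k :=
  qbin Q (2 * k) (k + s) * Q ^+ k / qpoch (Q ^+ 2) (Q ^+ 2) k ^+ 2.
Definition ut (F : fieldType) (Q : F) n s k :=
  qpoch (Q ^+ n)^-1 Q k * qpoch (Q ^+ n.+1) Q k * Wt Q s k.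
Definition Vt (F : fieldType) (Q : F) n s k :=
  qpoch (Q ^+ n.+2)^-1 Q k * qpoch (Q ^+ n.+1) Q k * Wt Q s k.
Definition Gt (F : fieldType) (Q : F) n s k :=
  Vt Q n s k * gfun Q (Q ^+ n) (Q ^+ s) (Q ^+ k).
Definition St (F : fieldType) (Q : F) n s := \sum_(k < n.+1) ut Q n s k.

Lemma Wt_lt (F : fieldType) (Q : F) s k : (k < s)%N -> Wt Q s k = 0.
Proof. by move=> h; rewrite /Wt qbin_gt ?mul0r //; rewrite mul2n -addnn ltn_add2l. Qed.

Lemma qpoch2 (R : comRingType) (a Q : R) k :
  qpoch a Q k * (1 - a * Q^+k) * (1 - a * Q^+k.+1) =
  (1 - a) * (1 - a * Q) * qpoch (a * Q * Q) Q k.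
Proof. by rewrite -!qpochS !qpochSl mulrA. Qed.

Lemma u2 (F : fieldType) (Q : F) n s k : goodQ Q ->
  ut Q n.+2 s k = Vt Q n s k *
    ((1 - Q * Q^+n * Q^+k) * (1 - Q^+2 * Q^+n * Q^+k) / ((1 - Q * Q^+n) * (1 - Q^+2 * Q^+n))).
Proof.
move=> g.
have h1 : 1 - Q^+n.+1 != 0 by apply: nz1.
have h2 : 1 - Q^+n.+1 * Q != 0 by rewrite -exprSr; apply: nz1.
have E := qpoch2 (Q^+n.+1) Q k.
have E' : qpoch (Q^+n.+3) Q k = qpoch (Q ^+ n.+1) Q k * (1 - Q^+n.+1 * Q^+k)
   * (1 - Q^+n.+1 * Q^+k.+1) / ((1 - Q^+n.+1) * (1 - Q^+n.+1 * Q)).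
  by rewrite E -!exprSr; field; rewrite -exprSr in h2; rewrite h1 h2.
rewrite /ut /Vt E' (exprS Q n) (exprS Q k) !mulrA.
move: h1 h2; rewrite (exprS Q n) => h1 h2.
by field; nzs.
Qed.

Lemma u0 (F : fieldType) (Q : F) n s k : goodQ Q ->
  ut Q n s k = Vt Q n s k *
    ((1 - (Q^+n * Q^+2)^-1 * Q^+k) * (1 - (Q^+n * Q^+2)^-1 * (Q^+k * Q))
       / ((1 - (Q^+n * Q^+2)^-1) * (1 - (Q^+n * Q^+2)^-1 * Q))).
Proof.
move=> g.
have [g0 _] := g.
have hn : Q^+n != 0 by apply: nzX.
have E := qpoch2 (Q^+n * Q^+2)^-1 Q k.
have ec : (Q^+n * Q^+2)^-1 * Q * Q = (Q^+n)^-1 by field; nzs.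
rewrite ec in E.
have h1 : 1 - (Q^+n * Q^+2)^-1 != 0.
  rewrite -exprD subr_eq0 eq_sym invr_eq1; apply: (proj2 g); by rewrite addn2.
have h2 : 1 - (Q^+n * Q^+2)^-1 * Q != 0.
  have -> : (Q^+n * Q^+2)^-1 * Q = (Q^+n.+1)^-1 by rewrite (exprS Q n); field; rewrite hn g0.
  rewrite subr_eq0 eq_sym invr_eq1; by apply: (proj2 g).
have E' : qpoch (Q^+n)^-1 Q k = qpoch (Q ^+ n * Q^+2)^-1 Q k * (1 - (Q^+n * Q^+2)^-1 * Q^+k)
   * (1 - (Q^+n * Q^+2)^-1 * Q^+k.+1) / ((1 - (Q^+n * Q^+2)^-1) * (1 - (Q^+n * Q^+2)^-1 * Q)).
  by rewrite E; field; nzs.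
rewrite /ut /Vt E' -exprD addn2 (exprSr Q k).
by field; nzs.
Qed.

Lemma W_step (F : fieldType) (Q : F) s k : goodQ Q -> (s <= k)%N ->
  Wt Q s k.+1 = Wt Q s k *
   ((1 - Q * (Q^+k)^+2) * (1 - Q^+2 * (Q^+k)^+2) * Q /
       ((1 - Q * Q^+k * Q^+s) * (1 - Q * Q^+k / Q^+s) * (1 - Q^+2 * (Q^+k)^+2)^+2)).
Proof.
move=> g hsk.
have [g0 _] := g.
have l1 : (k + s <= 2 * k)%N by rewrite mul2n -addnn leq_add2l.
have l2 : (k.+1 + s <= 2 * k.+1)%N by rewrite mul2n -addnn leq_add2l (leqW hsk).
rewrite /Wt (qbinE g l1) (qbinE g l2).
have -> : (2 * k.+1 = (2 * k).+2)%N by rewrite mulnS.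
have -> : (k.+1 + s = (k + s).+1)%N by rewrite addSn.
have -> : ((2 * k).+2 - (k + s).+1 = (k - s).+1)%N.
  by rewrite subSS subSn // mul2n -addnn subnDl.
have -> : (2 * k - (k + s) = k - s)%N by rewrite mul2n -addnn subnDl.
rewrite !qpochS.
have e1 : Q^+(2*k) = (Q^+k)^+2 by rewrite mulnC exprM.
have e2 : Q^+(k - s) = Q^+k / Q^+s.
  by rewrite -{2}(subnK hsk) exprD mulfK //; apply: nzX.
rewrite exprS e1 exprD e2 exprAC (exprS Q k).
have f1 : Q^+k != 0 by apply: nzX.
have f2 : Q^+s != 0 by apply: nzX.
have f3 : 1 - Q * Q^+k * Q^+s != 0 by rewrite -exprS -exprD; apply: nz1.
have f4 : Q^+s - Q * Q^+k != 0.
  have -> : Q * Q^+k = Q^+(k-s).+1 * Q^+s by rewrite exprS -mulrA -exprD subnK.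
  have -> : Q^+s - Q^+(k-s).+1 * Q^+s = (1 - Q^+(k-s).+1) * Q^+s by rewrite mulrBl mul1r.
  by rewrite mulf_neq0 //; apply: nz1.
have f5 : 1 - (Q * Q^+k)^+2 != 0 by rewrite -exprS -exprM; apply: nz1.
have f10 : 1 - Q ^+ 2 * (Q ^+ 2) ^+ k != 0 by rewrite -exprM -exprD; apply: nz1.
have f6 := qpochQQ_neq0 (2 * k) g.
have f7 := qpochQQ_neq0 (k + s) g.
have f8 := qpochQQ_neq0 (k - s) g.
have f9 := qpochQ2_neq0 k g.
move: f1 f2 f3 f4 f5 f6 f7 f8 f9.
move: (Q^+k) (Q^+s) (qpoch Q Q (2 * k)) (qpoch Q Q (k + s)) (qpoch Q Q (k - s)) (qpoch (Q^+2) (Q^+2) k).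
move=> x b P1 P2 P3 P4 f1 f2 f3 f4 f5 f6 f7 f8 f9.
by field; rewrite ?f10 ?f2 ?f3 ?f4 ?f6 ?f7 ?f8 ?f9.
Qed.

Lemma V_step (F : fieldType) (Q : F) n s k : goodQ Q -> (s <= k)%N ->
  Vt Q n s k.+1 = Vt Q n s k *
   ((1 - (Q^+n * Q^+2)^-1 * Q^+k) * (1 - Q^+n * Q * Q^+k) *
    ((1 - Q * (Q^+k)^+2) * (1 - Q^+2 * (Q^+k)^+2) * Q /
       ((1 - Q * Q^+k * Q^+s) * (1 - Q * Q^+k / Q^+s) * (1 - Q^+2 * (Q^+k)^+2)^+2))).
Proof.
move=> g hsk.
rewrite /Vt !qpochS (W_step g hsk) -(exprD Q n 2) addn2 (exprSr Q n).
ring.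
Qed.

Lemma factV (F : fieldType) (V c2 c0 r1 r0 t g1 g0 : F) :
  c2 * r1 - c0 * r0 = t * g1 - g0 -> c2 * (V * r1) - c0 * (V * r0) = V * t * g1 - V * g0.
Proof.
move=> h; transitivity (V * (c2 * r1 - c0 * r0)); first by ring.
by rewrite h; ring.
Qed.

Lemma gfun_b (F : fieldType) (Q a b : F) : b != 0 -> gfun Q a b b = 0.
Proof. by move=> hb; rewrite /gfun divff // subrr !mulr0 mul0r. Qed.

Lemma gfun_1 (F : fieldType) (Q a b : F) : gfun Q a b 1 = 0.
Proof. by rewrite /gfun expr1n subrr !mul0r mulr0 mul0r. Qed.

Definition c2f (F : fieldType) (Q : F) n s :=
  (1 - Q^+2 * Q^+n / Q^+s) * (1 - Q^+2 * Q^+n * Q^+s).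
Definition c0f (F : fieldType) (Q : F) n s :=
  Q * (1 - Q * Q^+n / Q^+s) * (1 - Q * Q^+n * Q^+s).


Lemma tele (F : fieldType) (Q : F) n s k : goodQ Q ->
  c2f Q n s * ut Q n.+2 s k - c0f Q n s * ut Q n s k = Gt Q n s k.+1 - Gt Q n s k.
Proof.
move=> g; have [g0 _] := g.
case: (ltnP k s) => hks.
  have z1 : forall m, ut Q m s k = 0 by move=> m; rewrite /ut (Wt_lt _ hks) mulr0.
  have z3 : Gt Q n s k = 0 by rewrite /Gt /Vt (Wt_lt _ hks) mulr0 mul0r.
  have z4 : Gt Q n s k.+1 = 0.
    case: (ltnP k.+1 s) => h2; first by rewrite /Gt /Vt (Wt_lt _ h2) mulr0 mul0r.
    have e : k.+1 = s by apply/eqP; rewrite eqn_leq h2 hks.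
    by rewrite /Gt e gfun_b ?mulr0 //; apply: nzX.
  by rewrite !z1 z3 z4 !mulr0 subrr.
rewrite (u2 _ _ _ g) (u0 _ _ _ g) /Gt (V_step _ g hks) (exprS Q k).
rewrite /c2f /c0f.
apply: factV; apply: key_identity => //; try (by apply: nzX).
- by rewrite -exprS; apply: nz1.
- by rewrite -exprD; apply: nz1; rewrite ?addn2.
- by rewrite -exprSr; apply: nz1'.
- by rewrite -exprD; apply: nz1'; rewrite ?addn2.
- by rewrite -exprS -exprD; apply: nz1.
- have -> : Q * Q^+k = Q^+(k-s).+1 * Q^+s by rewrite exprS -mulrA -exprD subnK.
  have -> : Q^+s - Q^+(k-s).+1 * Q^+s = (1 - Q^+(k-s).+1) * Q^+s by rewrite mulrBl mul1r.
  by rewrite mulf_neq0 //; [apply: nz1 | apply: nzX].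
- by rewrite -exprMn -exprS -exprM; apply: nz1.
Qed.

Lemma ut_big (F : fieldType) (Q : F) n s k : goodQ Q -> (n < k)%N -> ut Q n s k = 0.
Proof.
move=> g h; rewrite /ut (qpoch_zero h) ?mul0r //.
by rewrite mulVf //; apply: nzX.
Qed.

Lemma St_ext (F : fieldType) (Q : F) n s : goodQ Q ->
  St Q n s = \sum_(k < n.+3) ut Q n s k.
Proof.
move=> g; rewrite /St; symmetry; rewrite 2!big_ord_recr /= !(@ut_big _ Q n s _ g) ?addr0 //.
Qed.

Lemma St_rec (F : fieldType) (Q : F) n s : goodQ Q ->
  c2f Q n s * St Q n.+2 s - c0f Q n s * St Q n s = 0.
Proof.
move=> g; rewrite (@St_ext _ Q n s g) /St !mulr_sumr -sumrB.
rewrite (eq_bigr (fun k : 'I_n.+3 => Gt Q n s k.+1 - Gt Q n s k)); last first.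
  by move=> i _; apply: tele.
rewrite -(big_mkord xpredT (fun k => Gt Q n s k.+1 - Gt Q n s k)).
rewrite telescope_sumr // /Gt expr0 gfun_1 mulr0 subr0.
rewrite /Vt (@qpoch_zero _ _ _ _ n.+2) ?mul0r //.
by rewrite mulVf //; apply: nzX.
Qed.

Lemma goodQ_X (F : fieldType) (q0 : F) j : goodQ q0 -> (0 < j)%N -> goodQ (q0 ^+ j).
Proof.
move=> [h0 h] hj; split; first by rewrite expf_neq0.
by move=> i hi; rewrite -exprM; apply: h; rewrite muln_gt0 hj.
Qed.

Definition Cf (F : fieldType) (q0 : F) n s :=
  (-1) ^+ s * (q0 ^+ n / q0 ^+ (s * s)) * qbin (q0 ^+ 4) n ((n - s) %/ 2) ^+ 2
  * (qpoch (q0 ^+ 2) (q0 ^+ 2) (n - s) * qpoch (q0 ^+ 2) (q0 ^+ 2) (n + s))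
  / qpoch (q0 ^+ 4) (q0 ^+ 4) n ^+ 2.

Lemma Cf_rec (F : fieldType) (q0 : F) n s : goodQ q0 -> (s <= n)%N -> ~~ odd (n - s) ->
  c2f (q0 ^+ 2) n s * Cf q0 n.+2 s = c0f (q0 ^+ 2) n s * Cf q0 n s.
Proof.
move=> g hsn hodd.
have gQ := @goodQ_X _ q0 2 g isT.
have gR := @goodQ_X _ q0 4 g isT.
set m := ((n - s) %/ 2)%N.
have hm : (m * 2 = n - s)%N by rewrite /m divn2 muln2 -[RHS]odd_double_half (negPf hodd).
have hmn : (m <= n)%N by rewrite /m; apply: (leq_trans (leq_div _ _)); rewrite leq_subr.
rewrite /Cf -/m.
have -> : ((n.+2 - s) %/ 2 = m.+1)%N.
  by rewrite -addn2 -addnBAC // divnDr // divnn addn1.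
have hm2 : (m.+1 <= n.+2)%N by rewrite ltnS (leqW hmn).
rewrite (qbinE gR hmn) (qbinE gR hm2).
rewrite subSS (subSn hmn) (subSn (leqW hsn)) (subSn hsn) !addSn !qpochS.
have e4 : q0^+4 = (q0^+2)^+2 by rewrite -exprM.
have eq2 : q0^+n.+2 = q0^+n * q0^+2 by rewrite -exprD addn2.
rewrite !e4 eq2.
set Q := q0^+2.
have eRm : (Q^+2)^+m = Q^+n / Q^+s.
  rewrite -exprM mulnC hm -{2}(subnK hsn) exprD mulfK //; exact: nzX.
have eRnm : (Q^+2)^+(n - m) = Q^+n * Q^+s.
  rewrite -exprM -exprD; congr (_ ^+ _); lia.
rewrite (exprS (Q^+2) n) (exprS Q (n - s)) (exprS Q (n + s)) eRm eRnm.
have ens : Q^+(n - s) = Q^+n / Q^+s.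
  rewrite -{2}(subnK hsn) exprD mulfK //; exact: nzX.
rewrite ens.
rewrite exprD /c2f /c0f.
have hsn2 : (s <= n.+2)%N by rewrite (leqW (leqW hsn)).
have f1 : Q^+s - Q^+2 * Q^+n != 0.
  have -> : Q^+2 * Q^+n = Q^+(n.+2 - s) * Q^+s by rewrite -!exprD subnK // addn2.
  have -> : Q^+s - Q^+(n.+2 - s) * Q^+s = (1 - Q^+(n.+2 - s)) * Q^+s by rewrite mulrBl mul1r.
  rewrite mulf_neq0 //; [apply: nz1 => //; by rewrite subn_gt0 ltnS (leqW hsn) | exact: nzX].
field.
repeat (apply/andP; split) => //; try (by apply: qpochQ2_neq0); try (by apply: nzX);
 try (by rewrite -!exprS -exprM; apply: nz1); try (by rewrite -!exprD; apply: nz1).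
Qed.

Lemma qpoch_neg_aux (F : fieldType) (q0 : F) s : goodQ q0 ->
  \prod_(i < s) (1 - ((q0^+2)^+i.+1)^-1) * q0^+(s * s) * q0^+s = (-1)^+s * qpoch (q0^+2) (q0^+2) s.
Proof.
move=> g; have gQ := @goodQ_X _ q0 2 g isT.
elim: s => [|s IH]; first by rewrite big_ord0 !expr0 qpoch0 !mulr1.
have hX : forall j, q0^+j != 0 by move=> j; apply: nzX.
have IH' : \prod_(i < s) (1 - ((q0^+2)^+i.+1)^-1) =
    (-1)^+s * qpoch (q0^+2) (q0^+2) s / (q0^+(s * s) * q0^+s).
  by rewrite -IH; field; rewrite hX hX.
rewrite big_ord_recr /= IH' qpochS.
have e : q0^+(s.+1 * s.+1) * q0^+s.+1 = q0^+(s * s) * q0^+s * (q0^+2)^+s.+1.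
  by rewrite -exprM -!exprD; congr (_ ^+ _); lia.
rewrite -mulrA e -exprS exprS.
have hQ : (q0^+2)^+s.+1 != 0 by apply: nzX.
rewrite -exprS (exprS (-1) s); move: hQ; move: ((q0^+2)^+s.+1) => X hQ.
by field; rewrite hQ !hX.
Qed.


Lemma qpoch_neg (F : fieldType) (q0 : F) s : goodQ q0 ->
  qpoch ((q0^+2)^+s)^-1 (q0^+2) s * q0^+(s * s) * q0^+s = (-1)^+s * qpoch (q0^+2) (q0^+2) s.
Proof.
move=> g; rewrite -qpoch_neg_aux //; congr (_ * _ * _).
rewrite /qpoch (reindex_inj rev_ord_inj) /=.
apply: eq_bigr => i _.
have hi : (i.+1 <= s)%N by apply: ltn_ord.
have -> : (q0^+2)^+s = (q0^+2)^+(s - i.+1) * (q0^+2)^+i.+1 by rewrite -exprD subnK.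
have h1 : (q0^+2)^+(s - i.+1) != 0 by apply: nzX; apply: goodQ_X.
have h2 : (q0^+2)^+i.+1 != 0 by apply: nzX; apply: goodQ_X.
by congr (1 - _); field; rewrite h1 h2.
Qed.

Lemma base_even (F : fieldType) (q0 : F) s : goodQ q0 ->
  St (q0^+2) s s = Cf q0 s s.
Proof.
move=> g; have gQ := @goodQ_X _ q0 2 g isT.
rewrite /St big_ord_recr /= big1 ?add0r; last first.
  by move=> i _; rewrite /ut (Wt_lt _ (ltn_ord i)) mulr0.
rewrite /Cf subnn div0n.
have qb0 : qbin (q0^+4) s 0 = 1 by rewrite /qbin leq0n !qpoch0 divr1.
rewrite qb0 qpoch0 expr1n mulr1 mul1r.
rewrite /ut /Wt.
have qb1 : qbin (q0^+2) (2*s) (s+s) = 1.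
  rewrite /qbin addnn -mul2n leqnn subnn add0n expr1 divff //.
  exact: qpochQQ_neq0.
rewrite qb1 mul1r qpochD -exprS.
have e4 : q0^+4 = (q0^+2)^+2 by rewrite -exprM.
rewrite e4.
have A := qpoch_neg s g.
have hX : forall j, q0^+j != 0 by move=> j; apply: nzX.
have A' : qpoch ((q0^+2)^+s)^-1 (q0^+2) s = (-1)^+s * qpoch (q0^+2) (q0^+2) s / (q0^+(s*s) * q0^+s).
  by rewrite -A; field; rewrite !hX.
rewrite A'.
have -> : (q0^+2)^+s = q0^+s * q0^+s by rewrite exprAC expr2.
have h2 := qpochQ2_neq0 s gQ.
by field; rewrite h2 !hX.
Qed.

Lemma c2f_neq0 (F : fieldType) (Q : F) n s : goodQ Q -> (s < n.+2)%N -> c2f Q n s != 0.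
Proof.
move=> g h; rewrite /c2f mulf_neq0 //.
  have -> : Q^+2 * Q^+n = Q^+(n.+2 - s) * Q^+s by rewrite -!exprD (subnK (ltnW h)).
  rewrite mulfK; last by apply: nzX.
  by apply: (nz1 g); rewrite subn_gt0.
by rewrite -!exprD; apply: nz1.
Qed.

Lemma base_odd (F : fieldType) (Q : F) s : goodQ Q -> St Q s.+1 s = 0.
Proof.
move=> g; have [g0 _] := g.
case: s => [|s].
  rewrite /St !big_ord_recr big_ord0 /= /ut /Wt /qbin /= !qpochS !qpoch0.
  have h1 : 1 - Q != 0 by have := nz1 g (isT : (0 < 1)%N); rewrite expr1.
  have h2 : 1 - Q^+2 != 0 by apply: nz1.
  rewrite ?invr1 ?expr1n ?divr1.
  by field; rewrite ?h1 ?h2 ?g0.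
have := St_rec s s.+1 g.
have -> : St Q s s.+1 = 0.
  by rewrite /St big1 // => i _; rewrite /ut (Wt_lt _ (ltn_ord i)) mulr0.
rewrite mulr0 subr0 => /eqP; rewrite mulf_eq0 (negPf (c2f_neq0 g _)) //= => /eqP //.
Qed.

Lemma solve_c2 (F : fieldType) (c2 c0 X Y : F) : c2 != 0 -> c2 * X - c0 * Y = 0 -> X = c0 * Y / c2.
Proof. by move=> h /eqP; rewrite subr_eq0 => /eqP H; rewrite -H [c2 * X]mulrC mulfK. Qed.

Lemma core_j (F : fieldType) (q0 : F) s j : goodQ q0 ->
  St (q0^+2) (s + 2 * j) s = Cf q0 (s + 2 * j) s /\ St (q0^+2) (s + 2 * j).+1 s = 0.
Proof.
move=> g; have gQ := @goodQ_X _ q0 2 g isT.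
elim: j => [|j [IH1 IH2]]; first by rewrite muln0 addn0 base_even // base_odd.
have e : (s + 2 * j.+1 = (s + 2 * j).+2)%N by rewrite mulnS addnCA add2n.
rewrite e; set n := (s + 2 * j)%N.
have hsn : (s <= n)%N by rewrite leq_addr.
split.
  rewrite (solve_c2 (c2f_neq0 gQ (_ : s < n.+2)%N) (St_rec n s gQ)); last by rewrite ltnS (leqW hsn).
  rewrite IH1 -Cf_rec //; last by rewrite /n addKn mul2n odd_double.
  by rewrite mulrAC divff ?mul1r // c2f_neq0 // ltnS (leqW hsn).
rewrite (solve_c2 (c2f_neq0 gQ (_ : s < n.+3)%N) (St_rec n.+1 s gQ)); last by rewrite !ltnS !leqW.
by rewrite IH2 mulr0 mul0r.
Qed.

Lemma core (F : fieldType) (q0 : F) s n : goodQ q0 -> (s <= n)%N ->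
  St (q0^+2) n s = if odd s == odd n then Cf q0 n s else 0.
Proof.
move=> g hsn.
have en : n = (s + (n - s))%N by rewrite subnKC.
have [j hj] : exists j, (n - s = 2 * j + odd (n - s))%N.
  by exists (n - s)./2; rewrite -{1}(odd_double_half (n - s)) addnC -mul2n.
move: hj; case ho: (odd (n - s)) => /= hj.
  have -> : (odd s == odd n) = false.
    by rewrite en oddD ho; case: (odd s).
  have en' : n = (s + 2 * j).+1 by rewrite {1}en hj /= addnA addn1.
  by rewrite en' (core_j s j g).2.
have -> : (odd s == odd n) = true.
  by rewrite en oddD ho addbF eqxx.
have en' : n = (s + 2 * j)%N by rewrite {1}en hj /= addn0.
by rewrite en' (core_j s j g).1.
Qed.


Lemma conv_poly (F : fieldType) (q0 : F) k :
  qpoch (q0^+2) (q0^+2) (2 * k) * qpoch ((q0^+2)^+2) ((q0^+2)^+2) k =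
  qpoch q0 (q0^+2) k * qpoch (- q0^+2) (q0^+2) k * qpoch (- q0) q0 (2 * k)
  * qpoch (q0^+2) (q0^+2) k ^+ 2.
Proof.
elim: k => [|k IH]; first by rewrite muln0 !qpoch0 expr1n !mulr1.
have e : (2 * k.+1 = (2 * k).+2)%N by rewrite mulnS.
rewrite e !qpochS.
transitivity (qpoch (q0^+2) (q0^+2) (2 * k) * qpoch ((q0^+2)^+2) ((q0^+2)^+2) k *
  ((1 - q0 ^+ 2 * (q0 ^+ 2) ^+ (2 * k)) * (1 - q0 ^+ 2 * (q0 ^+ 2) ^+ (2 * k).+1) *
   (1 - (q0^+2)^+2 * ((q0^+2)^+2)^+k))); first by ring.
rewrite IH.
have e1 : (q0^+2)^+(2 * k) = (q0^+k)^+4 by rewrite -!exprM; congr (_ ^+ _); lia.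
have e2 : ((q0^+2)^+2)^+k = (q0^+k)^+4 by rewrite -!exprM; congr (_ ^+ _); lia.
have e3 : (q0^+2)^+k = (q0^+k)^+2 by rewrite exprAC.
have e4 : q0^+(2 * k) = (q0^+k)^+2 by rewrite mulnC exprM.
rewrite (exprS (q0^+2) (2 * k)) (exprS q0 (2 * k)) e1 e2 e3 e4.
ring.
Qed.

Lemma nzP1 (F : fieldType) (q0 : F) j : goodQ q0 -> (0 < j)%N -> 1 + q0^+j != 0.
Proof.
move=> g hj; apply/negP => /eqP h.
have hx : q0^+j = -1 by apply/eqP; rewrite -addr_eq0 addrC h.
have := proj2 g (j * 2)%N; rewrite muln_gt0 hj exprM hx expr2 mulrNN mulr1 eqxx.
by move=> /(_ isT).
Qed.

Lemma conv_term (F : fieldType) (q0 : F) s k : goodQ q0 ->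
  qbin (q0 ^+ 2) (2 * k) k ^+ 2 * qbin (q0 ^+ 2) (2 * k) (k + s) * q0 ^+ (2 * k)
  / (qpoch (- q0 ^+ 2) (q0 ^+ 2) k ^+ 2 * qpoch (- q0) q0 (2 * k) ^+ 2)
  = qpoch q0 (q0^+2) k ^+ 2 * Wt (q0^+2) s k.
Proof.
move=> g; have gQ := @goodQ_X _ q0 2 g isT.
have hk : (k <= 2 * k)%N by rewrite leq_pmull.
rewrite (qbinE gQ hk) /Wt.
have -> : (2 * k - k = k)%N by rewrite mul2n -addnn addnK.
have E := conv_poly q0 k.
have h1 := qpochQQ_neq0 k gQ.
have h2 := qpochQ2_neq0 k gQ.
have h3 : qpoch (- q0 ^+ 2) (q0 ^+ 2) k != 0.
  apply/prodf_neq0 => i _; rewrite mulNr opprK -exprS -exprM; exact: nzP1.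
have h4 : qpoch (- q0) q0 (2 * k) != 0.
  apply/prodf_neq0 => i _; rewrite mulNr opprK -exprS; exact: nzP1.
have E' : qpoch (q0^+2) (q0^+2) (2 * k) = qpoch q0 (q0^+2) k * qpoch (- q0^+2) (q0^+2) k
    * qpoch (- q0) q0 (2 * k) * qpoch (q0^+2) (q0^+2) k ^+ 2
    / qpoch ((q0^+2)^+2) ((q0^+2)^+2) k.
  by rewrite -E mulfK.
rewrite E' -(exprM q0 2 k).
by field; rewrite h1 h2 h3 h4.
Qed.


Lemma qintE p : ('X - 1) * qint p = 'X^p - 1.
Proof.
rewrite /qint; elim: p => [|p IH]; first by rewrite big_ord0 mulr0 expr0 subrr.
rewrite big_ord_recr /= mulrDr IH exprS; ring.
Qed.

Lemma qint_root1 p : (0 < p)%N -> ~~ root (qint p) 1.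
Proof.
move=> hp; rewrite /root /qint horner_sum.
under eq_bigr => i _ do rewrite hornerXn expr1n.
by rewrite sumr_const card_ord pnatr_eq0 -lt0n.
Qed.

Lemma dvdp_XnsubX (d : {poly rat}) m a : d %| 'X^m - 1 -> d %| 'X^(a * m) - 1.
Proof.
move=> h; apply: (dvdp_trans h).
have := subrXX ('X^m : {poly rat}) 1 a; rewrite expr1n -exprM mulnC => ->.
exact: dvdp_mulIl.
Qed.

Lemma coprime_Xm p m : prime p -> ~~ (p %| m)%N -> coprimep ('X^m - 1 : {poly rat}) (qint p).
Proof.
move=> hp hpm.
have p0 : (0 < p)%N by apply: prime_gt0.
have [a _ ha] := Bezoutl m p0.
have hg : gcdn p m = 1%N by apply/eqP; rewrite -/(coprime p m) prime_coprime.
rewrite hg in ha.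
set v := ((1 + a * m) %/ p)%N.
have hv : (1 + a * m = v * p)%N by rewrite /v divnK.
have c1 : coprimep ('X - 1 : {poly rat}) (qint p).
  by rewrite coprimep_sym -polyC1 coprimep_XsubC qint_root1.
apply/coprimepP => d h1 h2.
have h3 : d %| 'X^p - 1 by rewrite -qintE dvdp_mull.
have h4 : d %| 'X^(v * p) - 1 by apply: dvdp_XnsubX.
have h5 : d %| 'X^(a * m) - 1 by apply: dvdp_XnsubX.
have h6 : d %| 'X - 1.
  have -> : ('X - 1 : {poly rat}) = ('X^(v * p) - 1) - 'X * ('X^(a * m) - 1).
    by rewrite -hv exprS; ring.
  by rewrite dvdp_sub // dvdp_mull.
by move/coprimepP: c1; apply.
Qed.


Definition pint p (x : RF) := exists N D : {poly rat}, coprimep D (qint p) /\ x * D%:F = N%:F.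

Lemma pint_poly p P : pint p (P%:F).
Proof. by exists P, 1; rewrite coprime1p tofrac1 mulr1. Qed.

Lemma pintD p x y : pint p x -> pint p y -> pint p (x + y).
Proof.
move=> [N1 [D1 [c1 e1]]] [N2 [D2 [c2 e2]]].
exists (N1 * D2 + N2 * D1), (D1 * D2); split; first by rewrite coprimepMl c1 c2.
by rewrite tofracD !tofracM -e1 -e2; ring.
Qed.

Lemma pintM p x y : pint p x -> pint p y -> pint p (x * y).
Proof.
move=> [N1 [D1 [c1 e1]]] [N2 [D2 [c2 e2]]].
exists (N1 * N2), (D1 * D2); split; first by rewrite coprimepMl c1 c2.
by rewrite !tofracM -e1 -e2; ring.
Qed.

Lemma pintN p x : pint p x -> pint p (- x).
Proof.
move=> [N1 [D1 [c1 e1]]]; exists (- N1), D1; split => //.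
by rewrite tofracN -e1 mulNr.
Qed.

Lemma pintB p x y : pint p x -> pint p y -> pint p (x - y).
Proof. by move=> h1 h2; apply: pintD => //; apply: pintN. Qed.

Lemma pint_inv p D : coprimep D (qint p) -> D != 0 -> pint p (D%:F)^-1.
Proof.
move=> c h; exists 1, D; split => //.
by rewrite mulVf ?tofrac1 // tofrac_eq0.
Qed.

Lemma pint_prod p k (f : nat -> RF) : (forall i, (i < k)%N -> pint p (f i)) ->
  pint p (\prod_(i < k) f i).
Proof.
elim: k => [|k IH] h; first by rewrite big_ord0 -tofrac1; apply: pint_poly.
rewrite big_ord_recr /=; apply: pintM; last exact: h.
by apply: IH => i hi; apply: h; rewrite ltnS ltnW.
Qed.

Lemma pint_sum p k (f : nat -> RF) : (forall i, (i < k)%N -> pint p (f i)) ->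
  pint p (\sum_(i < k) f i).
Proof.
elim: k => [|k IH] h; first by rewrite big_ord0 -tofrac0; apply: pint_poly.
rewrite big_ord_recr /=; apply: pintD; last exact: h.
by apply: IH => i hi; apply: h; rewrite ltnS ltnW.
Qed.

Lemma qqX j : qq ^+ j = ('X^j : {poly rat})%:F.
Proof. by rewrite /qq tofracXn. Qed.

Lemma pint_qqX p j : pint p (qq ^+ j).
Proof. by rewrite qqX; apply: pint_poly. Qed.

Lemma pint_qq p : pint p qq.
Proof. by apply: pint_poly. Qed.

Lemma pint_1 p : pint p 1.
Proof. by rewrite -tofrac1; apply: pint_poly. Qed.

Lemma pint_qqV p : (0 < p)%N -> pint p qq^-1.
Proof.
move=> hp; apply: pint_inv; last by rewrite polyX_eq0.
rewrite coprimep_sym -['X]subr0 -polyC0 coprimep_XsubC /root /qint horner_sum.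
rewrite -(prednK hp) big_ord_recl /= expr0 hornerC big1 ?addr0 ?oner_eq0 //.
by move=> i _; rewrite hornerXn expr0n.
Qed.

Lemma pint_inv1X p j : prime p -> ~~ (p %| j)%N -> pint p (1 - qq ^+ j)^-1.
Proof.
move=> hp hj.
have hj0 : (0 < j)%N by rewrite lt0n; apply: contra hj => /eqP ->; rewrite dvdn0.
have -> : (1 - qq ^+ j)^-1 = - (('X^j - 1 : {poly rat})%:F)^-1.
  by rewrite tofracB qqX tofrac1 -invrN opprB.
apply: pintN; apply: pint_inv; first exact: coprime_Xm.
rewrite subr_eq0; apply/negP => /eqP h.
have := congr1 (fun q : {poly rat} => size q) h; rewrite /= size_polyXn size_poly1 => -[] hj1.
by rewrite hj1 in hj0.
Qed.


Lemma pint_qpoch p a Q m : pint p a -> pint p Q -> pint p (qpoch a Q m).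
Proof.
move=> ha hQ; apply: (@pint_prod p m (fun i => 1 - a * Q ^+ i)) => i _; apply: pintB; first exact: pint_1.
apply: pintM => //; elim: i {ha} => [|i IH]; first by rewrite expr0; apply: pint_1.
by rewrite exprS; apply: pintM.
Qed.

Lemma not_dvd p c j : prime p -> odd p -> (c %| 4)%N -> (0 < j < p)%N -> ~~ (p %| c * j)%N.
Proof.
move=> hp ho hc /andP [j0 jp].
rewrite Euclid_dvdM // negb_or; apply/andP; split.
  apply/negP => h; have h4 : (p %| 4)%N by apply: dvdn_trans hc.
  have : (p %| 2 * 2)%N by [].
  rewrite Euclid_dvdM // orbb => h2.
  have := dvdn_leq (isT : (0 < 2)%N) h2; rewrite leq_eqVlt ltnS => /orP [/eqP e|h1].
    by rewrite e in ho.
  by move: (prime_gt1 hp); rewrite ltnNge h1.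
apply/negP => h; have := dvdn_leq j0 h; by rewrite leqNgt jp.
Qed.

Lemma pint_qpochQQ_inv p m : prime p -> odd p -> (m < p)%N -> pint p (qpoch (qq^+2) (qq^+2) m)^-1.
Proof.
move=> hp ho hm; rewrite /qpoch -prodfV.
apply: (@pint_prod p m (fun i => (1 - qq^+2 * (qq^+2)^+i)^-1)) => i hi.
rewrite -exprS -exprM; apply: pint_inv1X => //; apply: not_dvd => //.
by rewrite /= (leq_ltn_trans hi hm).
Qed.

Lemma pint_qpochQ2_inv p m : prime p -> odd p -> (m < p)%N ->
  pint p (qpoch ((qq^+2)^+2) ((qq^+2)^+2) m)^-1.
Proof.
move=> hp ho hm; rewrite /qpoch -prodfV.
apply: (@pint_prod p m (fun i => (1 - (qq^+2)^+2 * ((qq^+2)^+2)^+i)^-1)) => i hi.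
rewrite -exprS -!exprM mulnA; apply: pint_inv1X => //; apply: not_dvd => //.
by rewrite /= (leq_ltn_trans hi hm).
Qed.

Lemma pint_Wt p s k : prime p -> odd p -> (k + s < p)%N -> pint p (Wt (qq^+2) s k).
Proof.
move=> hp ho h; rewrite /Wt /qbin.
case: ifP => hk; last by rewrite !mul0r -tofrac0; apply: pint_poly.
apply: pintM; [apply: pintM|].
- apply: pintM; first by apply: pint_qpoch; rewrite -?exprM; apply: pint_qqX.
  exact: pint_qpochQQ_inv.
- by rewrite -exprM; apply: pint_qqX.
- rewrite -exprVn; apply: pintM; apply: pint_qpochQ2_inv => //;
  apply: leq_ltn_trans h; apply: leq_addr.
Qed.


Lemma pintX p x j : pint p x -> pint p (x ^+ j).
Proof.
move=> h; elim: j => [|j IH]; first by rewrite expr0; apply: pint_1.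
by rewrite exprS; apply: pintM.
Qed.

Lemma cong_prod p k (A B Z : nat -> RF) :
  (forall i, (i < k)%N -> [/\ pint p (A i), pint p (B i), pint p (Z i) &
      A i - B i = ((qint p)^+2)%:F * Z i]) ->
  exists z, pint p z /\ \prod_(i < k) A i - \prod_(i < k) B i = ((qint p)^+2)%:F * z.
Proof.
elim: k => [|k IH] h.
  by exists 0; split; [rewrite -tofrac0; apply: pint_poly | rewrite !big_ord0 subrr mulr0].
have [z [hz e]] : exists z, pint p z /\ \prod_(i < k) A i - \prod_(i < k) B i = ((qint p)^+2)%:F * z.
  by apply: IH => i hi; apply: h; rewrite ltnS ltnW.
have [hA hB hZ eZ] := h k (ltnSn k).
exists (z * A k + (\prod_(i < k) B i) * Z k); split.
  apply: pintD; apply: pintM => //.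
  by apply: (@pint_prod p k B) => i hi; have [] := h i (ltnW hi).
rewrite !big_ord_recr /=.
have -> : \prod_(i < k) A i * A k - \prod_(i < k) B i * B k =
   (\prod_(i < k) A i - \prod_(i < k) B i) * A k + \prod_(i < k) B i * (A k - B k) by ring.
by rewrite e eZ; ring.
Qed.

Lemma factor_cong_gen (F : fieldType) (q0 P c a w : F) :
  q0 != 0 -> q0 - 1 != 0 -> a != 0 -> P * (q0 - 1) = c - 1 -> a * q0 = c ->
  (1 - q0 * w)^+2 - (1 - a^-1 * w) * (1 - a * q0^+2 * w) = P^+2 * (q0 * w * (q0 - 1)^+2 / c).
Proof.
move=> h0 h1 ha eP ec.
have eP' : P = (c - 1) / (q0 - 1) by rewrite -eP mulfK.
rewrite eP' -ec; by field; rewrite h0 h1 ha.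
Qed.

Lemma qq_neq0 : qq != 0.
Proof. by rewrite /qq tofrac_eq0 polyX_eq0. Qed.

Lemma qq1_neq0 : qq - 1 != 0.
Proof.
rewrite /qq -tofrac1 -tofracB tofrac_eq0 subr_eq0; apply/negP => /eqP h.
by have := congr1 (fun q : {poly rat} => size q) h; rewrite /= size_polyX size_poly1.
Qed.

Lemma qint_qq p : (qint p)%:F * (qq - 1) = qq^+p - 1.
Proof.
have := congr1 (fun q : {poly rat} => q%:F) (qintE p).
by rewrite /= tofracM tofracB tofracB tofracXn tofrac1 mulrC.
Qed.

Lemma factor_cong p n i : p = n.*2.+1 ->
  (1 - qq * (qq^+2)^+i)^+2 - (1 - ((qq^+2)^+n)^-1 * (qq^+2)^+i) * (1 - (qq^+2)^+n.+1 * (qq^+2)^+i)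
  = ((qint p)^+2)%:F * (qq * (qq^+2)^+i * (qq - 1)^+2 / qq^+p).
Proof.
move=> ep.
rewrite (exprSr (qq^+2) n) tofracXn; apply: factor_cong_gen.
- exact: qq_neq0.
- exact: qq1_neq0.
- by rewrite !expf_neq0 // qq_neq0.
- exact: qint_qq.
- by rewrite -exprM -exprSr mul2n ep.
Qed.


Ltac pintac := repeat match goal with
 | H : pint _ ?x |- pint _ ?x => exact: H
 | |- pint _ 1 => exact: pint_1
 | |- pint _ qq => exact: pint_qq
 | |- pint _ (qq ^+ _) => exact: pint_qqX
 | |- pint _ (_ * _) => apply: pintM
 | |- pint _ (_ - _) => apply: pintB
 | |- pint _ (_ + _) => apply: pintD
 | |- pint _ (_ ^+ _) => apply: pintX
 end.

Lemma goodQ_qq : goodQ qq.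
Proof.
split; first exact: qq_neq0.
move=> j hj; rewrite qqX -tofrac1 tofrac_eq; apply/negP => /eqP h.
have := congr1 (fun q : {poly rat} => size q) h; rewrite /= size_polyXn size_poly1 => -[] e.
by rewrite e in hj.
Qed.

Lemma sum_cong p N (f g : nat -> RF) :
  (forall k, (k < N)%N -> exists z, pint p z /\ f k - g k = ((qint p)^+2)%:F * z) ->
  exists z, pint p z /\ \sum_(k < N) f k - \sum_(k < N) g k = ((qint p)^+2)%:F * z.
Proof.
elim: N => [|N IH] h.
  by exists 0; split; [rewrite -tofrac0; apply: pint_poly | rewrite !big_ord0 subrr mulr0].
have [z1 [h1 e1]] : exists z, pint p z /\ \sum_(k < N) f k - \sum_(k < N) g k = ((qint p)^+2)%:F * z.
  by apply: IH => k hk; apply: h; rewrite ltnS ltnW.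
have [z2 [h2 e2]] := h N (ltnSn N).
exists (z1 + z2); split; first exact: pintD.
rewrite !big_ord_recr /= mulrDr -e1 -e2; ring.
Qed.

Lemma term_cong p n s k : prime p -> odd p -> p = n.*2.+1 -> (k <= n)%N -> (s <= n)%N ->
  exists z, pint p z /\
   qbin (qq ^+ 2) (2 * k) k ^+ 2 * qbin (qq ^+ 2) (2 * k) (k + s) * qq ^+ (2 * k)
     / (qpoch (- qq ^+ 2) (qq ^+ 2) k ^+ 2 * qpoch (- qq) qq (2 * k) ^+ 2)
   - ut (qq ^+ 2) n s k = ((qint p)^+2)%:F * z.
Proof.
move=> hp ho ep hk hs.
rewrite (conv_term s k goodQ_qq) /ut.
have [z [hz ez]] : exists z, pint p z /\ qpoch qq (qq^+2) k ^+ 2 -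
    qpoch ((qq^+2)^+n)^-1 (qq^+2) k * qpoch ((qq^+2)^+n.+1) (qq^+2) k = ((qint p)^+2)%:F * z.
  rewrite /qpoch -prodrXl -big_split /=.
  apply: (@cong_prod p k (fun i => (1 - qq * (qq^+2)^+i)^+2)
     (fun i => (1 - ((qq^+2)^+n)^-1 * (qq^+2)^+i) * (1 - (qq^+2)^+n.+1 * (qq^+2)^+i))
     (fun i => qq * (qq^+2)^+i * (qq - 1)^+2 / qq^+p)) => i hi.
  have hV : pint p ((qq^+2)^+n)^-1 by rewrite -!exprVn; apply: pintX; apply: pintX; apply: pint_qqV; apply: prime_gt0.
  have hV2 : pint p (qq^+p)^-1 by rewrite -exprVn; apply: pintX; apply: pint_qqV; apply: prime_gt0.
  split; try pintac.
  - exact: factor_cong.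
exists (z * Wt (qq^+2) s k); split.
  apply: pintM => //; apply: pint_Wt => //.
  rewrite ep ltnS -addnn; exact: leq_add.
transitivity ((qpoch qq (qq^+2) k ^+ 2 - qpoch ((qq^+2)^+n)^-1 (qq^+2) k
   * qpoch ((qq^+2)^+n.+1) (qq^+2) k) * Wt (qq^+2) s k); first by ring.
rewrite ez; ring.
Qed.


Lemma rhs_eq p n s : p = n.*2.+1 -> (s <= n)%N ->
  Cf qq n s =
       (-1) ^+ s * qq ^ ((n%N)%:Z - (s * s)%N%:Z)
       * qbin (qq ^+ 4) n ((p - 2 * s - 1) %/ 4) ^+ 2
       * (qpoch (qq ^+ 2) (qq ^+ 2) ((p - 2 * s - 1) %/ 2)
          * qpoch (qq ^+ 2) (qq ^+ 2) ((p + 2 * s - 1) %/ 2))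
       / qpoch (qq ^+ 4) (qq ^+ 4) n ^+ 2.
Proof.
move=> ep hs.
have e1 : (p - 2 * s - 1 = 2 * (n - s))%N by rewrite ep; lia.
have e2 : (p + 2 * s - 1 = 2 * (n + s))%N by rewrite ep; lia.
have e3 : (2 * (n - s) %/ 4 = (n - s) %/ 2)%N by rewrite -[4%N]/(2 * 2)%N divnMl.
rewrite e1 e2 e3 mulKn // mulKn // /Cf.
congr (_ * _ * _ * _ / _).
rewrite expfzDr; last exact: qq_neq0.
by rewrite -invr_expz.
Qed.

Unset Implicit Arguments.

Theorem theorem2p1 (p s : nat) (hp : prime p) (hodd : odd p)
    (hs : (s <= (p - 1) %/ 2)%N) :
  qcong p 2
    (\sum_(k < ((p - 1) %/ 2).+1)
        qbin (qq ^+ 2) (2 * k) k ^+ 2 * qbin (qq ^+ 2) (2 * k) (k + s)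
        * qq ^+ (2 * k)
        / (qpoch (- qq ^+ 2) (qq ^+ 2) k ^+ 2 * qpoch (- qq) qq (2 * k) ^+ 2))
    (if odd s == odd ((p - 1) %/ 2) then
       (-1) ^+ s * qq ^ ((((p - 1) %/ 2)%N)%:Z - (s * s)%N%:Z)
       * qbin (qq ^+ 4) ((p - 1) %/ 2) ((p - 2 * s - 1) %/ 4) ^+ 2
       * (qpoch (qq ^+ 2) (qq ^+ 2) ((p - 2 * s - 1) %/ 2)
          * qpoch (qq ^+ 2) (qq ^+ 2) ((p + 2 * s - 1) %/ 2))
       / qpoch (qq ^+ 4) (qq ^+ 4) ((p - 1) %/ 2) ^+ 2
     else 0).
Proof.
set n := ((p - 1) %/ 2)%N.
have ep : p = n.*2.+1.
  have h := odd_double_half p; rewrite hodd /= in h.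
  have e : (p - 1 = (p./2).*2)%N by rewrite -{1}h add1n subn1.
  have nE : n = p./2 by rewrite /n e -muln2 mulnK.
  by rewrite nE -{1}h add1n.
rewrite -(rhs_eq ep hs).
rewrite -(@core _ qq s n goodQ_qq hs).
have [z [hz ez]] : exists z, pint p z /\
   \sum_(k < n.+1) (qbin (qq ^+ 2) (2 * k) k ^+ 2 * qbin (qq ^+ 2) (2 * k) (k + s)
        * qq ^+ (2 * k)
        / (qpoch (- qq ^+ 2) (qq ^+ 2) k ^+ 2 * qpoch (- qq) qq (2 * k) ^+ 2))
   - \sum_(k < n.+1) ut (qq ^+ 2) n s k = ((qint p)^+2)%:F * z.
  apply: (sum_cong (f := fun k => qbin (qq ^+ 2) (2 * k) k ^+ 2 * qbin (qq ^+ 2) (2 * k) (k + s)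
        * qq ^+ (2 * k)
        / (qpoch (- qq ^+ 2) (qq ^+ 2) k ^+ 2 * qpoch (- qq) qq (2 * k) ^+ 2))
     (g := fun k => ut (qq ^+ 2) n s k)) => k hk.
  by apply: term_cong.
have [N [D [cD eD]]] := hz.
exists N, D; split => //.
by rewrite /St ez -mulrA eD.
Qed.
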